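(* Let $n\ge3$, $c>0$, and let $\omega$ be as in the context. Then: (i) for all $x\ge x_0$, $(\gamma(x)+nc)\,x\,\frac{\omega'(x)}{\omega(x)}=2\gamma(x)-x\gamma'(x)-3nc$; (ii) $2x_0\omega''(x_0)+\omega'(x_0)>0$ and $\lim_{x\to\infty}\left(2x\omega''(x)+\omega'(x)\right)>0$; (iii) $\omega(x)-x\omega'(x)$ is bounded on $[0,\infty)$.
   Context: Definition of $\gamma$: For $n\ge 3$, $c>0$ and $x\ge 0$ put $\alpha(x)=nc+\frac{n}{2(n-1)}x-\frac{n-2}{2(n-1)}\sqrt{x^2+4(n-1)cx}$, $y_n=4(1-n)+\frac{2(n^2-4)}{\sqrt{2n-5}}\cos\!\left(\frac13\arctan\frac{n^2-4n+6}{2(n-1)\sqrt{2n-5}}\right)$, $x_0=y_nc$, $\beta(x)=\alpha(x_0)+\alpha'(x_0)(x-x_0)+\frac12\alpha''(x_0)(x-x_0)^2$, and $\gamma(x)=\alpha(x)$ for $x\ge x_0$, $\gamma(x)=\beta(x)$ for $0\le x<x_0$. Definition of $\omega$: $\omega$ is a positive $C^2$ function on $[0,\infty)$ such that for $x\ge x_0$ \[\omega(x)=\frac{x^2}{\sqrt{x^2+4(n-1)cx}}\left[\left(1+\frac{n^2c}{x}\right)\frac{\frac{n}{n-2}-\left(1+4(n-1)c/x\right)^{-1/2}}{\frac{n}{n-2}+\left(1+4(n-1)c/x\right)^{-1/2}}\right]^2.\] (On $[0,x_0)$, $\omega$ is an arbitrary positive $C^2$ extension; derivatives at $x_0$ are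 those of this $C^2$ function.) *)

(* Defs.v *)
From Stdlib Require Import Reals Lra ClassicalEpsilon.
Open Scope R_scope.

Definition Dlim (f : R -> R) (x : R) : R :=
  epsilon (inhabits 0) (fun l => derivable_pt_lim f x l).

Definition alpha (n : nat) (c x : R) : R :=
  INR n * c + INR n / (2 * (INR n - 1)) * x
  - (INR n - 2) / (2 * (INR n - 1)) * sqrt (x ^ 2 + 4 * (INR n - 1) * c * x).

Definition y_n (n : nat) : R :=
  4 * (1 - INR n)
  + 2 * (INR n ^ 2 - 4) / sqrt (2 * INR n - 5)
    * cos (/ 3 * atan ((INR n ^ 2 - 4 * INR n + 6)
                       / (2 * (INR n - 1) * sqrt (2 * INR n - 5)))).

Definition x0 (n : nat) (c : R) : R := y_n n * c.

Definition beta (n : nat) (c x : R) : R :=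
  alpha n c (x0 n c)
  + Dlim (alpha n c) (x0 n c) * (x - x0 n c)
  + / 2 * Dlim (Dlim (alpha n c)) (x0 n c) * (x - x0 n c) ^ 2.

(* gamma is only meaningful on [0, oo); for x < x0 we use beta. *)
Definition gamma (n : nat) (c x : R) : R :=
  if Rle_dec (x0 n c) x then alpha n c x else beta n c x.

Definition omega_formula (n : nat) (c x : R) : R :=
  x ^ 2 / sqrt (x ^ 2 + 4 * (INR n - 1) * c * x)
  * ((1 + INR n ^ 2 * c / x)
     * (INR n / (INR n - 2) - / sqrt (1 + 4 * (INR n - 1) * c / x))
     / (INR n / (INR n - 2) + / sqrt (1 + 4 * (INR n - 1) * c / x))) ^ 2.

Definition cont_nonneg (f : R -> R) (x : R) : Prop :=
  limit1_in f (fun y => 0 <= y) (f x) x.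

Definition lim_infty (f : R -> R) (L : R) : Prop :=
  forall eps, eps > 0 -> exists M, forall x, x >= M -> Rabs (f x - L) < eps.

(* Main.v *)
Require Import Defs.
From Stdlib Require Import Reals Lra Psatz ClassicalEpsilon.
From Coquelicot Require Import Coquelicot.
Open Scope R_scope.

Lemma Dlim_eq f x l : derivable_pt_lim f x l -> Dlim f x = l.
Proof.
intros H. unfold Dlim.
assert (E := epsilon_spec (inhabits 0) (fun l => derivable_pt_lim f x l) (ex_intro _ l H)).
exact (uniqueness_limite f x _ _ E H).
Qed.

Lemma dpl_local f h x l d : derivable_pt_lim f x l -> 0 < d ->
  (forall y, Rabs (y - x) < d -> h y = f y) -> derivable_pt_lim h x l.
Proof.
intros Hf Hd Heq eps Heps.
destruct (Hf eps Heps) as [del Hdel].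
assert (Hm : 0 < Rmin del d) by (apply Rmin_pos; [apply cond_pos|lra]).
exists (mkposreal _ Hm). intros hh Hh0 Hhlt. simpl in Hhlt.
rewrite !Heq.
- apply Hdel; auto. apply Rlt_le_trans with (1 := Hhlt). apply Rmin_l.
- unfold Rminus. rewrite Rplus_opp_r, Rabs_R0. lra.
- replace (x + hh - x) with hh by ring. apply Rlt_le_trans with (1 := Hhlt). apply Rmin_r.
Qed.

Lemma dpl_glue f g a l : derivable_pt_lim f a l -> derivable_pt_lim g a l -> f a = g a ->
  derivable_pt_lim (fun y => if Rle_dec a y then f y else g y) a l.
Proof.
intros Hf Hg Ha eps Heps.
destruct (Hf eps Heps) as [d1 H1]. destruct (Hg eps Heps) as [d2 H2].
assert (Hm : 0 < Rmin d1 d2) by (apply Rmin_pos; apply cond_pos).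
exists (mkposreal _ Hm). intros hh Hh0 Hhlt. simpl in Hhlt.
destruct (Rle_dec a a) as [_|Hn]; [|lra].
destruct (Rle_dec a (a + hh)).
- apply H1; auto. apply Rlt_le_trans with (1 := Hhlt). apply Rmin_l.
- rewrite Ha. apply H2; auto. apply Rlt_le_trans with (1 := Hhlt). apply Rmin_r.
Qed.

Lemma dpl_right_uniq f g a l1 l2 : derivable_pt_lim f a l1 -> derivable_pt_lim g a l2 ->
  (forall y, a <= y -> f y = g y) -> l1 = l2.
Proof.
intros Hf Hg Heq.
destruct (Req_dec l1 l2) as [|Hne]; auto.
assert (He : 0 < Rabs (l1 - l2) / 2).
{ apply Rdiv_lt_0_compat; [apply Rabs_pos_lt; lra|lra]. }
destruct (Hf _ He) as [d1 H1]. destruct (Hg _ He) as [d2 H2].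
set (h := Rmin d1 d2 / 2).
assert (Hm : 0 < Rmin d1 d2) by (apply Rmin_pos; apply cond_pos).
assert (Hh : 0 < h) by (unfold h; lra).
assert (Hh1 : h < d1) by (unfold h; generalize (Rmin_l d1 d2); lra).
assert (Hh2 : h < d2) by (unfold h; generalize (Rmin_r d1 d2); lra).
assert (A1 := H1 h (Rgt_not_eq _ _ Hh) ltac:(rewrite Rabs_pos_eq; lra)).
assert (A2 := H2 h (Rgt_not_eq _ _ Hh) ltac:(rewrite Rabs_pos_eq; lra)).
rewrite !Heq in A1 by lra.
exfalso.
assert (Rabs (l1 - l2) <= Rabs ((g (a + h) - g a) / h - l2) + Rabs ((g (a + h) - g a) / h - l1)).
{ replace (l1 - l2) with (((g (a + h) - g a) / h - l2) - ((g (a + h) - g a) / h - l1)) by ring.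
  eapply Rle_trans; [apply Rabs_triang|]. rewrite Rabs_Ropp. lra. }
lra.
Qed.

Definition Hh (N c u : R) := c*(N*u-(N-2))^4/(4*(N-1)*u*(u*u-1)).
Definition P1 (N u : R) := -((N*u-(N-2))^3 * (N*u^3+3*(N-2)*u^2-3*N*u-(N-2)))/(32*(N-1)^2*u^3).
Definition uf (N c x : R) := sqrt (1 + 4*(N-1)*c*/x).
Definition Vf N u := N*u-(N-2).
Definition Wf N u := N*u^3+3*(N-2)*u^2-3*N*u-(N-2).
Definition Wp N u := 3*N*u^2+6*(N-2)*u-3*N.
Definition Zf N u := (u*u-1)*(3*N*u*Wf N u + u*Vf N u*Wp N u - 3*Vf N u*Wf N u) - u*u*Vf N u*Wf N u.
Definition Ehat N u := Vf N u ^2 * Zf N u / (32*(N-1)^2*u^5).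
Definition Q2 N c u := (Ehat N u - P1 N u)*(u*u-1)/(8*(N-1)*c).
Definition Ad N u := N/(2*(N-1)) - (N-2)/(2*(N-1))*(u - (u*u-1)/(2*u)).
Definition Bq N c u := c*(N*u-(N-2))^3*(3*N*u+(N-2))/(8*(N-1)*u^3).

Lemma uf_facts N c x : 3 <= N -> 0 < c -> 0 < x -> 1 < uf N c x /\ x = 4*(N-1)*c/(uf N c x * uf N c x - 1)
  /\ 0 < 1 + 4*(N-1)*c*/x.
Proof.
intros HN Hc Hx. unfold uf.
assert (Hp: 0 < 4*(N-1)*c*/x) by (apply Rdiv_lt_0_compat; nra).
rewrite sqrt_sqrt by lra. split; [|split;[|lra]].
- rewrite <- sqrt_1 at 1. apply sqrt_lt_1_alt; split; lra.
- field. split; [lra|nra].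
Qed.

Ltac usub N c x :=
  let Hu := fresh "Hu" in let Hxe := fresh "Hxe" in let Hpos := fresh "Hpos" in
  destruct (uf_facts N c x) as [Hu [Hxe Hpos]]; try lra;
  unfold uf in *; set (u := sqrt (1 + 4*(N-1)*c*/x)) in *;
  repeat split; try lra;
  clearbody u; subst x.

Ltac nzt := try (repeat match goal with |- ?a * ?b <> 0 => apply Rmult_integral_contrapositive_currified end; nra).

Lemma dH N c x : 3 <= N -> 0 < c -> 0 < x ->
  derivable_pt_lim (fun y => Hh N c (uf N c y)) x (P1 N (uf N c x)).
Proof.
intros HN Hc Hx.
apply is_derive_Reals. unfold Hh, uf. auto_derive; usub N c x.
all: nzt.
unfold P1. field. repeat split; nra.
Qed.

Lemma dP N c x : 3 <= N -> 0 < c -> 0 < x ->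
  derivable_pt_lim (fun y => P1 N (uf N c y)) x (Q2 N c (uf N c x)).
Proof.
intros HN Hc Hx.
apply is_derive_Reals. unfold P1, uf. auto_derive; usub N c x.
all: nzt.
unfold Q2, Ehat, P1, Zf, Vf, Wf, Wp. field. repeat split; nra.
Qed.

Lemma Eid N c x : 3 <= N -> 0 < c -> 0 < x ->
  2*x*Q2 N c (uf N c x) + P1 N (uf N c x) = Ehat N (uf N c x).
Proof.
intros HN Hc Hx. usub N c x. unfold Q2. field. split; nra.
Qed.

Lemma Zpos N u : 3 <= N -> 1 < u -> 0 < Zf N u.
Proof.
intros HN Hu.
set (t := u - 1). set (s := N - 3).
assert (Ht : 0 < t) by (unfold t; lra). assert (Hs : 0 <= s) by (unfold s; lra).
replace (Zf N u) with (8 - 8*t*s + 42*t^2*s^2 + 16*t + 158*t^2 + 140*t^2*s + 354*t^3 + 320*t^3*s + 78*t^3*s^2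
  + 309*t^4 + 254*t^4*s + 53*t^4*s^2 + 120*t^5 + 88*t^5*s + 16*t^5*s^2 + 18*t^6 + 12*t^6*s + 2*t^6*s^2)
  by (unfold Zf, Vf, Wf, Wp, t, s; ring).
assert (0 < 8 - 8*t*s + 42*t^2*s^2) by nra.
assert (0 <= t*s) by nra.
assert (0 <= t^2) by nra.
assert (0 <= t^3) by (apply pow_le; lra).
assert (0 <= t^4) by (apply pow_le; lra).
assert (0 <= t^5) by (apply pow_le; lra).
assert (0 <= t^6) by (apply pow_le; lra).
assert (0 <= s^2) by nra.
assert (0 <= t^2*s) by nra. assert (0 <= t^3*s) by nra. assert (0 <= t^3*s^2) by nra.
assert (0 <= t^4*s) by nra. assert (0 <= t^4*s^2) by nra.
assert (0 <= t^5*s) by nra. assert (0 <= t^5*s^2) by nra.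
assert (0 <= t^6*s) by nra. assert (0 <= t^6*s^2) by nra.
lra.
Qed.

Lemma Ehat_pos N u : 3 <= N -> 1 < u -> 0 < Ehat N u.
Proof.
intros HN Hu. unfold Ehat.
assert (0 < Vf N u) by (unfold Vf; nra).
assert (0 < Zf N u) by (apply Zpos; lra).
apply Rdiv_lt_0_compat.
- apply Rmult_lt_0_compat; [apply pow_lt; lra|lra].
- apply Rmult_lt_0_compat; [apply Rmult_lt_0_compat; [lra|apply pow_lt; lra]|apply pow_lt; lra].
Qed.

Lemma Ehat1 N : 3 <= N -> Ehat N 1 = / (N-1)^2.
Proof. intros HN. unfold Ehat, Zf, Vf, Wf, Wp. field. lra. Qed.

Lemma sq_eq N c y : 3 <= N -> 0 < c -> 0 < y ->
  sqrt (y^2 + 4*(N-1)*c*y) = y * uf N c y.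
Proof.
intros HN Hc Hy. unfold uf.
replace (y^2 + 4*(N-1)*c*y) with ((y*y)*(1+4*(N-1)*c*/y)) by (field; lra).
rewrite sqrt_mult_alt by nra. rewrite sqrt_square by lra. reflexivity.
Qed.

Lemma omega_eq n c y : 3 <= INR n -> 0 < c -> 0 < y ->
  omega_formula n c y = Hh (INR n) c (uf (INR n) c y).
Proof.
intros HN Hc Hy. unfold omega_formula. rewrite sq_eq by auto.
change (4 * (INR n - 1) * c / y) with (4 * (INR n - 1) * c * / y).
fold (uf (INR n) c y). usub (INR n) c y.
unfold Hh. field. repeat split; try nra.
Qed.

Lemma alpha_alt n c y : 3 <= INR n -> 0 < c -> 0 < y ->
  alpha n c y = INR n * c + INR n / (2 * (INR n - 1)) * y
    - (INR n - 2) / (2 * (INR n - 1)) * (y * uf (INR n) c y).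
Proof. intros HN Hc Hy. unfold alpha. rewrite sq_eq by auto. reflexivity. Qed.

Lemma dalpha n c x : 3 <= INR n -> 0 < c -> 0 < x ->
  derivable_pt_lim (alpha n c) x (Ad (INR n) (uf (INR n) c x)).
Proof.
intros HN Hc Hx.
apply dpl_local with (f := fun y => INR n * c + INR n / (2 * (INR n - 1)) * y
    - (INR n - 2) / (2 * (INR n - 1)) * (y * uf (INR n) c y)) (d := x); [|lra|].
- apply is_derive_Reals. unfold uf. auto_derive; usub (INR n) c x.
  all: nzt.
  unfold Ad. field. repeat split; nra.
- intros y Hy. apply alpha_alt; auto.
  destruct (Rcase_abs (y - x)) as [Hl|Hl]; [rewrite Rabs_left in Hy by lra|rewrite Rabs_right in Hy by lra]; lra.
Qed.

Lemma Bid n c x : 3 <= INR n -> 0 < c -> 0 < x ->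
  Hh (INR n) c (uf (INR n) c x) - x * P1 (INR n) (uf (INR n) c x) = Bq (INR n) c (uf (INR n) c x).
Proof. intros HN Hc Hx. usub (INR n) c x. unfold Hh, P1, Bq. field. repeat split; nra. Qed.

Lemma ident n c x : 3 <= INR n -> 0 < c -> 0 < x ->
  (alpha n c x + INR n * c) * x * (P1 (INR n) (uf (INR n) c x) / Hh (INR n) c (uf (INR n) c x))
  = 2 * alpha n c x - x * Ad (INR n) (uf (INR n) c x) - 3 * INR n * c.
Proof.
intros HN Hc Hx. rewrite alpha_alt by auto. usub (INR n) c x.
unfold Hh, P1, Ad. field. repeat split; try nra.
Qed.

Lemma uf_mono N c x y : 3 <= N -> 0 < c -> 0 < x -> x <= y -> uf N c y <= uf N c x.
Proof.
intros HN Hc Hx Hxy. unfold uf. apply sqrt_le_1_alt.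
assert (/ y <= / x) by (apply Rinv_le_contravar; lra).
assert (0 < 4*(N-1)*c) by nra. nra.
Qed.

Lemma yn_pos n : (3 <= n)%nat -> 0 < y_n n.
Proof.
intros Hn. assert (HN : 3 <= INR n) by (apply le_INR in Hn; simpl in Hn; lra).
unfold y_n. set (N := INR n) in *.
set (sq := sqrt (2*N-5)).
assert (Hsq : 0 < sq) by (apply sqrt_lt_R0; lra).
assert (Hsq2 : sq * sq = 2*N-5) by (apply sqrt_sqrt; lra).
set (z := (N ^ 2 - 4 * N + 6) / (2 * (N - 1) * sq)).
assert (Hz : 0 < z) by (apply Rdiv_lt_0_compat; nra).
assert (Ha0 : 0 < atan z) by (rewrite <- atan_0; apply atan_increasing; lra).
assert (Ha1 := atan_bound z).
assert (Hpi := PI_RGT_0).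
assert (Hcos : sqrt 3 / 2 < cos (/3 * atan z)).
{ rewrite <- cos_PI6. apply cos_decreasing_1; lra. }
set (s3 := sqrt 3) in *.
assert (H3 : 0 < s3) by (apply sqrt_lt_R0; lra).
assert (H33 : s3 * s3 = 3) by (apply sqrt_sqrt; lra).
assert (Hsq3 : (N^2-4)*s3 >= 4*(N-1)*sq).
{ assert (Hp : 3*(N^2-4)^2 - 16*(N-1)^2*(2*N-5) = (N-4)^2*(3*N^2-8*N+8)) by ring.
  assert (0 <= (N-4)^2*(3*N^2-8*N+8)) by (apply Rmult_le_pos; [apply pow2_ge_0|nra]).
  assert (0 <= (N^2-4)*s3) by nra.
  assert (0 <= 4*(N-1)*sq) by nra.
  assert (((N^2-4)*s3)^2 >= (4*(N-1)*sq)^2).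
  { replace (((N^2-4)*s3)^2) with (3*(N^2-4)^2) by (rewrite <- H33; ring).
    replace ((4*(N-1)*sq)^2) with (16*(N-1)^2*(2*N-5)) by (rewrite <- Hsq2; ring). lra. }
  nra. }
assert (Hc0 : 0 < 2 * (N ^ 2 - 4) / sq) by (apply Rdiv_lt_0_compat; nra).
assert (2 * (N ^ 2 - 4) / sq * (s3/2) < 2 * (N ^ 2 - 4) / sq * cos (/ 3 * atan z)) by
  (apply Rmult_lt_compat_l; lra).
assert (2 * (N ^ 2 - 4) / sq * (s3/2) >= 4*(N-1)).
{ replace (2 * (N ^ 2 - 4) / sq * (s3/2)) with ((N^2-4)*s3/sq) by (field; lra).
  apply Rle_ge. apply Rmult_le_reg_r with sq; auto.
  replace ((N^2-4)*s3/sq*sq) with ((N^2-4)*s3) by (field; lra). lra. }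
lra.
Qed.

Lemma Ehat_cont N : 3 <= N -> continuity_pt (Ehat N) 1.
Proof.
intros HN. apply derivable_continuous_pt. apply ex_derive_Reals_0.
unfold Ehat, Zf, Vf, Wf, Wp. auto_derive. nzt.
Qed.

Lemma abs_lt_d y x d : Rabs (y - x) < d -> x - d < y.
Proof. intros H. destruct (Rcase_abs (y - x)); [rewrite Rabs_left in H|rewrite Rabs_right in H]; lra. Qed.

Theorem mainTheorem10 (n : nat) (c : R) (w w1 w2 : R -> R) :
  (3 <= n)%nat -> 0 < c ->
  (* omega positive on [0,oo) *)
  (forall x, 0 <= x -> 0 < w x) ->
  (* omega is C^2 on [0,oo): derivatives on (0,oo), continuity of
     w, w', w'' up to the endpoint 0 *)
  (forall x, 0 < x -> derivable_pt_lim w x (w1 x)) ->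
  (forall x, 0 < x -> derivable_pt_lim w1 x (w2 x)) ->
  (forall x, 0 <= x -> cont_nonneg w x /\ cont_nonneg w1 x /\ cont_nonneg w2 x) ->
  (* explicit formula on [x0, oo) *)
  (forall x, x0 n c <= x -> w x = omega_formula n c x) ->
  (* (i) *)
  (forall x, x0 n c <= x ->
     exists g1, derivable_pt_lim (gamma n c) x g1 /\
       (gamma n c x + INR n * c) * x * (w1 x / w x)
       = 2 * gamma n c x - x * g1 - 3 * INR n * c) /\
  (* (ii) *)
  (2 * x0 n c * w2 (x0 n c) + w1 (x0 n c) > 0 /\
   exists L, L > 0 /\ lim_infty (fun x => 2 * x * w2 x + w1 x) L) /\
  (* (iii) *)
  (exists M, forall x, 0 <= x -> Rabs (w x - x * w1 x) <= M).
Proof.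
intros Hn Hc Hwpos Hd1 Hd2 Hcont Hform.
assert (HN : 3 <= INR n) by (apply le_INR in Hn; simpl in Hn; lra).
assert (Hx0 : 0 < x0 n c) by (unfold x0; apply Rmult_lt_0_compat; [apply yn_pos|]; auto).
set (N := INR n) in *.
set (X0 := x0 n c) in *.
assert (Hom : forall y, 0 < y -> omega_formula n c y = Hh N c (uf N c y)) by (intros; apply omega_eq; auto).
assert (Hw1 : forall x, X0 <= x -> w1 x = P1 N (uf N c x)).
{ intros x Hx. destruct (Rle_lt_or_eq_dec _ _ Hx) as [Hlt|Heq].
  - apply uniqueness_limite with w x; [apply Hd1; lra|].
    apply dpl_local with (f := fun y => Hh N c (uf N c y)) (d := x - X0); [apply dH; lra|lra|].
    intros y Hy. apply abs_lt_d in Hy. rewrite Hform by lra. apply Hom; lra.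
  - subst x. apply (dpl_right_uniq w (fun y => Hh N c (uf N c y)) X0); [apply Hd1; lra|apply dH; lra|].
    intros y Hy. rewrite Hform by lra. apply Hom; lra. }
assert (Hw2 : forall x, X0 <= x -> w2 x = Q2 N c (uf N c x)).
{ intros x Hx. destruct (Rle_lt_or_eq_dec _ _ Hx) as [Hlt|Heq].
  - apply uniqueness_limite with w1 x; [apply Hd2; lra|].
    apply dpl_local with (f := fun y => P1 N (uf N c y)) (d := x - X0); [apply dP; lra|lra|].
    intros y Hy. apply abs_lt_d in Hy. apply Hw1; lra.
  - subst x. apply (dpl_right_uniq w1 (fun y => P1 N (uf N c y)) X0); [apply Hd2; lra|apply dP; lra|].
    intros y Hy. apply Hw1; lra. }
split; [|split].
-
  intros x Hx. exists (Ad N (uf N c x)). split.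
  + destruct (Rle_lt_or_eq_dec _ _ Hx) as [Hlt|Heq].
    * apply dpl_local with (f := alpha n c) (d := x - X0); [apply dalpha; [exact HN|exact Hc|lra]|lra|].
      intros y Hy. apply abs_lt_d in Hy. unfold gamma. fold X0.
      destruct (Rle_dec X0 y); [reflexivity|lra].
    * subst x. unfold gamma. fold X0.
      apply (dpl_glue (alpha n c) (beta n c)).
      -- apply dalpha; [exact HN|exact Hc|lra].
      -- assert (HD := Dlim_eq _ _ _ (dalpha n c X0 HN Hc Hx0)).
         apply is_derive_Reals. unfold beta. fold X0. auto_derive; auto.
         rewrite HD. replace (X0 + - X0) with 0 by ring. rewrite Rmult_0_l, !Rmult_0_r, Rmult_1_r, Rplus_0_r. reflexivity.
      -- unfold beta. fold X0. replace (X0 - X0) with 0 by ring. ring.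
  + assert (Hg : gamma n c x = alpha n c x).
    { unfold gamma. fold X0. destruct (Rle_dec X0 x); [reflexivity|lra]. }
    rewrite Hg, Hform, Hom, Hw1 by lra. apply ident; [exact HN|exact Hc|lra].
-
  split.
  + rewrite Hw2, Hw1 by lra. rewrite Eid by lra.
    apply Rlt_gt, Ehat_pos; auto. apply uf_facts; auto.
  + exists (/ (N-1)^2). split.
    { apply Rlt_gt, Rinv_0_lt_compat. apply pow_lt; lra. }
    intros eps Heps.
    destruct (Ehat_cont N HN eps Heps) as [alp [Halp Hal]].
    set (k := 4*(N-1)*c).
    assert (Hk : 0 < k) by (unfold k; nra).
    exists (Rmax X0 (k/alp + 1)).
    intros x Hx. assert (Hx1 := Rmax_l X0 (k/alp + 1)). assert (Hx2 := Rmax_r X0 (k/alp + 1)).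
    rewrite Hw2, Hw1 by lra. rewrite Eid by lra. rewrite <- Ehat1 by auto.
    destruct (uf_facts N c x HN Hc ltac:(lra)) as [Hu [_ Hpos]].
    assert (Huu : uf N c x * uf N c x = 1 + k / x) by (unfold uf; apply sqrt_sqrt; unfold k; lra).
    assert (Hkx0 : k < alp * x).
    { assert (k/alp < x) by lra. replace k with (alp*(k/alp)) at 1 by (field; lra).
      apply Rmult_lt_compat_l; lra. }
    assert (Hkx : k / x < alp).
    { apply (Rmult_lt_reg_r x); [lra|]. replace (k/x*x) with k by (field; lra). lra. }
    apply (Hal (uf N c x)). split.
    * split; [exact I|lra].
    * simpl. unfold R_dist. rewrite Rabs_right by lra. nra.
-
  set (u0 := uf N c X0).
  assert (Hu0 : 1 < u0) by (apply uf_facts; auto).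
  set (K1 := c*(N*u0)^3*(3*N*u0+N)/(8*(N-1))).
  assert (HK1 : forall x, X0 <= x -> Rabs (w x - x * w1 x) <= K1).
  { intros x Hx. rewrite Hform, Hom, Hw1 by lra. assert (HBq := Bid n c x HN Hc ltac:(lra)); fold N in HBq; rewrite HBq.
    assert (Hux : uf N c x <= u0) by (apply uf_mono; auto).
    assert (Hu1 : 1 < uf N c x) by (apply uf_facts; auto; lra).
    set (u := uf N c x) in *.
    unfold Bq. set (V := N*u-(N-2)).
    assert (HV : 0 < V) by (unfold V; nra).
    assert (HV2 : V <= N*u0) by (unfold V; nra).
    assert (H3 : 0 < 3*N*u+(N-2)) by nra.
    assert (H4 : 3*N*u+(N-2) <= 3*N*u0+N) by nra.
    assert (Hu3 : 1 <= u^3) by (replace 1 with (1^3) by ring; apply pow_incr; lra).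
    assert (HB : 0 <= c*V^3*(3*N*u+(N-2))/(8*(N-1)*u^3)).
    { apply Rmult_le_pos; [apply Rmult_le_pos; [apply Rmult_le_pos; [lra|apply pow_le; lra]|lra]|].
      apply Rlt_le, Rinv_0_lt_compat. apply Rmult_lt_0_compat; lra. }
    rewrite Rabs_pos_eq by exact HB.
    unfold K1.
    apply Rle_trans with (c*V^3*(3*N*u+(N-2))/(8*(N-1))).
    - unfold Rdiv. apply Rmult_le_compat_l; [apply Rmult_le_pos; [apply Rmult_le_pos; [lra|apply pow_le; lra]|lra]|].
      apply Rinv_le_contravar; [lra|]. nra.
    - unfold Rdiv. apply Rmult_le_compat_r; [apply Rlt_le, Rinv_0_lt_compat; lra|].
      apply Rmult_le_compat; [apply Rmult_le_pos; [lra|apply pow_le; lra]|lra| |lra].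
      apply Rmult_le_compat_l; [lra|]. apply pow_incr; lra. }
  destruct (Hcont 0 (Rle_refl 0)) as [Cw [Cw1 _]].
  destruct (Cw 1 ltac:(lra)) as [a1 [Ha1 Hb1]].
  destruct (Cw1 1 ltac:(lra)) as [a2 [Ha2 Hb2]].
  set (a := Rmin a1 a2).
  assert (Ha : 0 < a) by (apply Rmin_pos; lra).
  set (K2 := Rabs (w 0) + 1 + a * (Rabs (w1 0) + 1)).
  assert (HK2 : forall y, 0 <= y < a -> Rabs (w y - y * w1 y) <= K2).
  { intros y Hy.
    assert (Hya1 : y < a1) by (generalize (Rmin_l a1 a2); fold a; lra).
    assert (Hya2 : y < a2) by (generalize (Rmin_r a1 a2); fold a; lra).
    assert (E1 := Hb1 y ltac:(split; [lra|simpl; unfold R_dist; rewrite Rminus_0_r, Rabs_pos_eq; lra])).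
    assert (E2 := Hb2 y ltac:(split; [lra|simpl; unfold R_dist; rewrite Rminus_0_r, Rabs_pos_eq; lra])).
    simpl in E1, E2. unfold R_dist in E1, E2.
    assert (F1 : Rabs (w y) <= Rabs (w 0) + 1).
    { replace (w y) with ((w y - w 0) + w 0) by ring. eapply Rle_trans; [apply Rabs_triang|]. lra. }
    assert (F2 : Rabs (w1 y) <= Rabs (w1 0) + 1).
    { replace (w1 y) with ((w1 y - w1 0) + w1 0) by ring. eapply Rle_trans; [apply Rabs_triang|]. lra. }
    unfold Rminus. eapply Rle_trans; [apply Rabs_triang|]. rewrite Rabs_Ropp, Rabs_mult, (Rabs_pos_eq y) by lra.
    unfold K2. assert (0 <= Rabs (w1 y)) by apply Rabs_pos.
    assert (y * Rabs (w1 y) <= a * (Rabs (w1 0) + 1)) by (apply Rmult_le_compat; lra).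
    lra. }
  set (d := a / 2).
  assert (HK3 : exists K3, forall y, d <= y <= X0 -> Rabs (w y - y * w1 y) <= K3).
  { destruct (Rle_dec d X0) as [Hd|Hd].
    - destruct (continuity_ab_maj (fun y => Rabs (w y - y * w1 y)) d X0 Hd) as [Mx [HM _]].
      + intros y Hy.
        assert (Hy0 : 0 < y) by (unfold d in Hy; lra).
        apply (continuity_pt_comp (fun y => w y - y * w1 y) Rabs); [|apply Rcontinuity_abs].
        apply derivable_continuous_pt.
        exists (w1 y - (1 * w1 y + y * w2 y)).
        apply (derivable_pt_lim_minus w (fun y => y * w1 y)); [apply Hd1; lra|].
        apply (derivable_pt_lim_mult id w1); [apply derivable_pt_lim_id|apply Hd2; lra].
      + exists (Rabs (w Mx - Mx * w1 Mx)). exact HM.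
    - exists 0. intros y Hy. lra. }
  destruct HK3 as [K3 HK3].
  exists (Rmax K1 (Rmax K2 K3)).
  intros x Hx.
  assert (M1 := Rmax_l K1 (Rmax K2 K3)). assert (M2 := Rmax_r K1 (Rmax K2 K3)).
  assert (M3 := Rmax_l K2 K3). assert (M4 := Rmax_r K2 K3).
  destruct (Rle_dec X0 x) as [Hx0x|Hx0x].
  + specialize (HK1 x Hx0x). lra.
  + destruct (Rlt_dec x a) as [Hxa|Hxa].
    * specialize (HK2 x (conj Hx Hxa)). lra.
    * assert (d <= x <= X0) by (unfold d; lra). specialize (HK3 x H). lra.
Qed.
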